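(* Let $V$ be the abelian group (written additively) with generators $u_{a,b}$ for real numbers $0<b<a\le1$, subject to the relations: (1) $u_{a+a',b}=u_{a,b}+u_{a',b}$ whenever $0<b<\min(a,a')$ and $a+a'\le1$; (2) $u_{a,b+b'}=u_{a,b}+u_{a,b'}$ whenever $0<\min(b,b')$ and $b+b'<a\le1$; (3) $2u_{a,b}+u_{2b,a}=0$ whenever $0<b<a<2b\le1$. Then the assignment $u_{a,b}\mapsto a\wedge b$ induces a group isomorphism $V\to\bigwedge^2_{\mathbb{Q}}\mathbb{R}$.
   Context: $\bigwedge^2_{\mathbb{Q}}\mathbb{R}$ is the second exterior power of $\mathbb{R}$ viewed as a $\mathbb{Q}$-vector space. *)

(* Defs.v *)
From HB Require Import structures.
From mathcomp Require Import all_boot all_order all_algebra.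
From mathcomp Require Import reals.
Set Implicit Arguments. Unset Strict Implicit. Unset Printing Implicit Defensive.
Import Order.TTheory GRing.Theory Num.Theory.
Local Open Scope ring_scope.

(* Formal finite linear combinations  sum_i c_i [x_i]  with c_i in K,   *)
(* x_i in X, represented as lists; two lists represent the same element *)
(* of the free K-module K[X] iff all their coefficients agree.          *)
Section FormalSums.
Variables (K : pzRingType) (X : eqType).

Definition fsum := seq (K * X)%type.

Definition fcoef (s : fsum) (x : X) : K := \sum_(p <- s | p.2 == x) p.1.

Definition feq (s t : fsum) : Prop := forall x, fcoef s x = fcoef t x.

Definition fscale (c : K) (s : fsum) : fsum := [seq (c * p.1, p.2) | p <- s].

Definition fsub (s t : fsum) : fsum := s ++ fscale (-1) t.

Definition fcomb (l : seq (K * fsum)%type) : fsum :=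
  flatten [seq fscale q.1 q.2 | q <- l].

Definition in_span (rel : fsum -> Prop) (s : fsum) : Prop :=
  exists l : seq (K * fsum)%type, (forall i, (i < size l)%N -> rel (nth (0, [::]) l i).2) /\ feq (fcomb l) s.

End FormalSums.

Section Presentation.
Variable R : realType.

Definition isgen (p : R * R) : bool := (0 < p.2) && (p.2 < p.1) && (p.1 <= 1).

Definition gen_supported (s : fsum int (R * R)%type) : bool := all (fun p => isgen p.2) s.

Definition relV (r : fsum int (R * R)%type) : Prop :=
  (exists a a' b : R, [/\ 0 < b, b < Num.min a a', a + a' <= 1 &
      r = [:: (1, (a + a', b)); (-1, (a, b)); (-1, (a', b))]]) \/
  (exists a b b' : R, [/\ 0 < Num.min b b', b + b' < a, a <= 1 &
      r = [:: (1, (a, b + b')); (-1, (a, b)); (-1, (a, b'))]]) \/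
  (exists a b : R, [/\ 0 < b, b < a, a < 2 * b, 2 * b <= 1 &
      r = [:: (2%:Z, (a, b)); (1, (2 * b, a))]]).

(* the relation subgroup of V: V = Z[generators] / (span_Z relV) *)
Definition V_rel (s : fsum int (R * R)%type) : Prop := in_span relV s.

(* Exterior square of R over Q: the free Q-vector space Q[R x R] modulo the  *)
(* Q-span of the Q-bilinearity relations (this quotient is the tensor        *)
(* product R (x)_Q R) and of the elements x (x) x.  The class of (x, y) is   *)
(* x /\ y.                                                                   *)
Definition relW (r : fsum rat (R * R)%type) : Prop :=
  (exists x x' y : R, r = [:: (1, (x + x', y)); (-1, (x, y)); (-1, (x', y))]) \/
  (exists x y y' : R, r = [:: (1, (x, y + y')); (-1, (x, y)); (-1, (x, y'))]) \/
  (exists (q : rat) (x y : R), r = [:: (1, (ratr q * x, y)); (- q, (x, y))]) \/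
  (exists (q : rat) (x y : R), r = [:: (1, (x, ratr q * y)); (- q, (x, y))]) \/
  (exists x : R, r = [:: (1, (x, x))]).

Definition W_rel (w : fsum rat (R * R)%type) : Prop := in_span relW w.

(* the homomorphism Z[generators] -> Q[R x R] sending u_{a,b} to [(a,b)],  *)
(* whose composite with the projection gives u_{a,b} |-> a /\ b            *)
Definition wedge_map (s : fsum int (R * R)%type) : fsum rat (R * R)%type :=
  [seq ((p.1)%:~R, p.2) | p <- s].

End Presentation.

(* Main.v *)
Require Import Defs.
From HB Require Import structures.
From mathcomp Require Import all_boot all_order all_algebra.
From mathcomp Require Import reals.
From mathcomp Require Import ring lra.
Import Order.TTheory GRing.Theory Num.Theory.
Local Open Scope ring_scope.
Set Implicit Arguments. Unset Strict Implicit.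

Section Gen.
Variables (K : pzRingType) (X : eqType).
Implicit Types (s t : fsum K X).

Lemma fcoef_nil (x : X) : fcoef (Nil (K * X)) x = 0.
Proof. by rewrite /fcoef big_nil. Qed.

Lemma fcoef_cons (p : K * X) s x :
  fcoef (p :: s) x = p.1 * (p.2 == x)%:R + fcoef s x.
Proof. rewrite /fcoef big_cons; case: eqP => _; by rewrite ?mulr1 ?mulr0 ?add0r. Qed.

Lemma fcoef_cat s t x : fcoef (s ++ t) x = fcoef s x + fcoef t x.
Proof. by rewrite /fcoef big_cat. Qed.

Lemma fcoef_scale c s x : fcoef (fscale c s) x = c * fcoef s x.
Proof. rewrite /fcoef /fscale big_map mulr_sumr; exact: eq_bigr. Qed.

Lemma fcoef_sub s t x : fcoef (fsub s t) x = fcoef s x - fcoef t x.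
Proof. by rewrite /fsub fcoef_cat fcoef_scale mulN1r. Qed.

Lemma fcoef_flatten (ss : seq (fsum K X)) x :
  fcoef (flatten ss) x = \sum_(s <- ss) fcoef s x.
Proof. elim: ss => [|s ss IH]; first by rewrite big_nil fcoef_nil.
by rewrite /= fcoef_cat IH big_cons. Qed.

Lemma fcoef_fcomb (l : seq (K * fsum K X)) x :
  fcoef (fcomb l) x = \sum_(q <- l) q.1 * fcoef q.2 x.
Proof. rewrite /fcomb fcoef_flatten big_map; apply: eq_bigr => q _; exact: fcoef_scale. Qed.

Variable rel : fsum K X -> Prop.

Lemma span_feq s t : feq s t -> in_span rel s -> in_span rel t.
Proof. move=> e [l [Hl Hf]]; exists l; split=> // x; by rewrite Hf e. Qed.

Lemma span_lin (l : seq (K * fsum K X)) t :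
  List.Forall (fun q => in_span rel q.2) l ->
  (forall x, fcoef t x = \sum_(q <- l) q.1 * fcoef q.2 x) -> in_span rel t.
Proof.
elim: l t => [|[c s] l IH] t Hall Ht.
  exists [::]; split=> // x; by rewrite Ht big_nil /fcomb /= fcoef_nil.
inversion Hall as [|? ? Hs Hl]; subst.
have := IH (fcomb [seq (q.1, q.2) | q <- l]) Hl.
case=> [x|]; first by rewrite fcoef_fcomb big_map.
move=> l2 [Hl2 Hf2].
case: Hs => l1 [Hl1 Hf1].
exists ([seq (c * q.1, q.2) | q <- l1] ++ l2); split.
  move=> i; rewrite size_cat size_map => Hi.
  rewrite nth_cat size_map; case: ltnP => Hi1.
    rewrite (nth_map (0, [::])) //=; exact: Hl1.
  apply: Hl2; rewrite -(ltn_add2l (size l1)) subnKC //.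
move=> x; rewrite Ht big_cons /= -[fcoef s x]Hf1 !fcoef_fcomb big_cat /=.
rewrite -(fcoef_fcomb l2) Hf2 fcoef_fcomb !big_map mulr_sumr; congr (_ + _).
apply: eq_bigr => q _ /=; by rewrite mulrA.
Qed.

Lemma span_rel r : rel r -> in_span rel r.
Proof. move=> h; exists [:: (1, r)]; split.
  by case=> //= _; rewrite /=.
by move=> x; rewrite fcoef_fcomb big_cons big_nil addr0 mul1r. Qed.

End Gen.
Section Real.
Variable R : realType.
Notation S := (fsum int (R * R)%type).
Notation VR := (@V_rel R).

Ltac vforall := repeat (apply: List.Forall_cons; first by simpl; assumption); exact: List.Forall_nil.
Ltac vfin := move=> z; rewrite ?big_cons ?big_nil /= ?fcoef_sub ?fcoef_cat ?fcoef_scale ?fcoef_cons ?fcoef_nil /=; ring.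
Tactic Notation "vcomb" uconstr(l) := refine (@span_lin int (R * R)%type (@relV R) l _ _ _); [vforall | vfin].

Lemma rel1 (a a' b : R) : 0 < b -> b < a -> b < a' -> a + a' <= 1 ->
  VR [:: (1, (a + a', b)); (-1, (a, b)); (-1, (a', b))].
Proof. move=> *; apply: span_rel; left; exists a, a', b; split=> //.
by rewrite lt_min; apply/andP. Qed.

Lemma rel2 (a b b' : R) : 0 < b -> 0 < b' -> b + b' < a -> a <= 1 ->
  VR [:: (1, (a, b + b')); (-1, (a, b)); (-1, (a, b'))].
Proof. move=> *; apply: span_rel; right; left; exists a, b, b'; split=> //.
by rewrite lt_min; apply/andP. Qed.

Lemma rel3 (a b : R) : 0 < b -> b < a -> a < 2 * b -> 2 * b <= 1 ->
  VR [:: (2%:Z, (a, b)); (1, (2 * b, a))].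
Proof. move=> *; apply: span_rel; right; right; exists a, b; split=> //. Qed.

Lemma split1 (n : nat) (c b : R) : (0 < n)%N -> 0 < b -> b < c -> n%:R * c <= 1 ->
  VR [:: (1, (n%:R * c, b)); (- n%:Z, (c, b))].
Proof.
case: n => // n _ hb hbc; elim: n => [|n IH] h.
  rewrite mul1r; vcomb (Nil (int * S)).
have hc : 0 < c := lt_trans hb hbc.
have h1 : n.+1%:R * c <= 1.
  apply: le_trans h; rewrite ler_pM2r // ler_nat; by [].
have := rel1 (a := n.+1%:R * c) (a' := c) hb _ hbc.
have -> : n.+1%:R * c + c = n.+2%:R * c by rewrite -[n.+2]addn1 natrD mulrDl mul1r.
move=> /(_ _ h) H.
have H0 : b < n.+1%:R * c.
  have hn : (1:R) <= n.+1%:R by rewrite ler1n.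
  nra.
move: H => /(_ H0) H.
move: IH => /(_ h1) IH.
vcomb [:: (1, [:: (1, (n.+2%:R * c, b)); (-1, (n.+1%:R * c, b)); (-1, (c, b))]);
          (1, [:: (1, (n.+1%:R * c, b)); (- n.+1%:Z, (c, b))])].
Qed.

Lemma split2 (n : nat) (a c : R) : (0 < n)%N -> 0 < c -> n%:R * c < a -> a <= 1 ->
  VR [:: (1, (a, n%:R * c)); (- n%:Z, (a, c))].
Proof.
case: n => // n _ hc; elim: n => [|n IH] h ha.
  rewrite mul1r; vcomb (Nil (int * S)).
have h1 : n.+1%:R * c < a.
  apply: le_lt_trans h; rewrite ler_pM2r // ler_nat; by [].
have := rel2 (a := a) (b := n.+1%:R * c) (b' := c) _ hc.
have -> : n.+1%:R * c + c = n.+2%:R * c by rewrite -[n.+2]addn1 natrD mulrDl mul1r.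
move=> /(_ _ h ha) H.
have H0 : 0 < n.+1%:R * c by rewrite mulr_gt0 // ltr0n.
move: H => /(_ H0) H.
move: IH => /(_ h1 ha) IH.
vcomb [:: (1, [:: (1, (a, n.+2%:R * c)); (-1, (a, n.+1%:R * c)); (-1, (a, c))]);
          (1, [:: (1, (a, n.+1%:R * c)); (- n.+1%:Z, (a, c))])].
Qed.

Lemma SC0 (m n : nat) (a' b' : R) : (0 < m)%N -> (0 < n)%N -> 0 < b' -> b' < a' ->
  m%:R * a' <= 1 -> n%:R * b' < m%:R * a' ->
  VR [:: (1, (m%:R * a', n%:R * b')); (- (m * n)%N%:Z, (a', b'))].
Proof.
move=> hm hn hb hba h1 h2.
have H2 := split2 hn hb h2 h1.
have H1 := split1 hm hb hba h1.
vcomb [:: (1, [:: (1, (m%:R * a', n%:R * b')); (- n%:Z, (m%:R * a', b'))]);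
          (n%:Z, [:: (1, (m%:R * a', b')); (- m%:Z, (a', b'))])].
Qed.

Lemma SC (m n : nat) (a b a' b' : R) : (0 < m)%N -> (0 < n)%N -> 0 < b' -> b' < a' ->
  a = m%:R * a' -> b = n%:R * b' -> a <= 1 -> b < a ->
  VR [:: (1, (a, b)); (- (m * n)%N%:Z, (a', b'))].
Proof. move=> hm hn hb hba -> ->; exact: SC0. Qed.

Definition Fp_def (x y : R) : S :=
  let P := Num.bound x in let Q := Num.bound (y * P%:R / x) in
  [:: ((P * Q)%N%:Z, (x / P%:R, y / Q%:R))].
Fact Fp_key : unit. Proof. exact: tt. Qed.
Definition Fp := locked_with Fp_key Fp_def.
Lemma FpE : Fp = Fp_def. Proof. by rewrite /Fp unlock. Qed.

Lemma bound_pos (x : R) : 0 < x -> (0 < Num.bound x)%N /\ x < (Num.bound x)%:R.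
Proof. move=> hx; have h := archi_boundP (ltW hx); split; last exact: h.
by rewrite -(ltr0n R); apply: lt_trans h. Qed.

Definition veq (s t : S) := VR (fsub s t).

Lemma Fgen (x y : R) (p q : nat) : 0 < x -> 0 < y -> (0 < p)%N -> (0 < q)%N ->
  x / p%:R <= 1 -> y / q%:R < x / p%:R ->
  veq (Fp x y) [:: ((p * q)%N%:Z, (x / p%:R, y / q%:R))].
Proof.
move=> hx hy hp hq h1 h2.
rewrite /veq FpE /Fp_def /=.
set P := Num.bound x; set Q := Num.bound (y * P%:R / x).
have [hP hxP] := bound_pos hx.
have hyPx : 0 < y * P%:R / x by rewrite divr_gt0 // mulr_gt0 // ltr0n.
have [hQ hQ'] := bound_pos hyPx.
rewrite -/Q in hQ hQ'.
have pR : (0:R) < p%:R by rewrite ltr0n.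
have qR : (0:R) < q%:R by rewrite ltr0n.
have PR : (0:R) < P%:R by rewrite ltr0n.
have QR : (0:R) < Q%:R by rewrite ltr0n.
have p1 : (1:R) <= p%:R by rewrite ler1n.
have q1 : (1:R) <= q%:R by rewrite ler1n.
have P1 : (1:R) <= P%:R by rewrite ler1n.
have Q1 : (1:R) <= Q%:R by rewrite ler1n.
set a' := x / (p%:R * P%:R).
set b' := y / (q%:R * Q%:R * p%:R * P%:R).
have ha' : 0 < a' by rewrite divr_gt0 // mulr_gt0.
have hb' : 0 < b' by rewrite divr_gt0 // !mulr_gt0.
have ex : x = p%:R * P%:R * a' by rewrite /a'; field; rewrite ?gt_eqF //; apply: mulr_gt0.
have ey : y = q%:R * Q%:R * p%:R * P%:R * b' by rewrite /b'; field; rewrite ?gt_eqF //; apply: mulr_gt0.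
have E1 : x / p%:R = P%:R * a' by rewrite ex; field; rewrite gt_eqF.
have E2 : y / q%:R = (Q * p * P)%N%:R * b' by rewrite ey !natrM; field; rewrite gt_eqF.
have E3 : x / P%:R = p%:R * a' by rewrite ex; field; rewrite gt_eqF.
have E4 : y / Q%:R = (q * p * P)%N%:R * b' by rewrite ey !natrM; field; rewrite gt_eqF.
have hyx : y * P%:R < x * Q%:R.
  move: hQ'; rewrite ltr_pdivrMr //; lra.
have ineq1 : (Q * p * P)%N%:R * b' < P%:R * a'.
  by rewrite -E1 -E2.
have ineq2 : (q * p * P)%N%:R * b' < p%:R * a'.
  rewrite -E3 -E4 ltr_pdivrMr // mulrAC ltr_pdivlMr //.
have hba : b' < a'.
  move: ineq1; rewrite !natrM => ineq1.
  have : 1 <= Q%:R * p%:R :> R by rewrite -natrM ler1n muln_gt0 hQ.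
  move=> h.
  have h3 : P%:R * (Q%:R * p%:R * b') < P%:R * a' by lra.
  rewrite ltr_pM2l // in h3.
  have h4 : b' <= Q%:R * p%:R * b' by rewrite ler_peMl // ltW.
  lra.
have H1 := SC (m := P) (n := (Q * p * P)%N) (a := x / p%:R) (b := y / q%:R) hP
   ltac:(by rewrite !muln_gt0 hQ hp hP) hb' hba E1 E2 h1 h2.
have h1' : x / P%:R <= 1.
  rewrite ler_pdivrMr // mul1r; exact: ltW.
have H2 := SC (m := p) (n := (q * p * P)%N) (a := x / P%:R) (b := y / Q%:R) hp
   ltac:(by rewrite !muln_gt0 hq hp hP) hb' hba E3 E4 h1' ltac:(by rewrite E3 E4).
vcomb [:: ((P * Q)%N%:Z, [:: (1, (x / P%:R, y / Q%:R)); (- (p * (q * p * P))%N%:Z, (a', b'))]);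
          (- (p * q)%N%:Z, [:: (1, (x / p%:R, y / q%:R)); (- (P * (Q * p * P))%N%:Z, (a', b'))])].
Qed.

Lemma small (x y : R) (P Q : nat) : 0 < x -> 0 < y -> (0 < P)%N -> (0 < Q)%N ->
  y * P%:R / x < Q%:R -> y / Q%:R < x / P%:R.
Proof.
move=> hx hy hP hQ h.
have PR : (0:R) < P%:R by rewrite ltr0n.
have QR : (0:R) < Q%:R by rewrite ltr0n.
rewrite ltr_pdivrMr // in h.
rewrite ltr_pdivrMr // mulrAC ltr_pdivlMr //; lra.
Qed.

Lemma le1 (x : R) (P : nat) : 0 < x -> x < P%:R -> x / P%:R <= 1.
Proof. move=> hx h; have PR : (0:R) < P%:R by apply: lt_trans h.
by rewrite ler_pdivrMr // mul1r ltW. Qed.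

Lemma Fadd1 (x x' y : R) : 0 < x -> 0 < x' -> 0 < y ->
  veq (Fp (x + x') y) (Fp x y ++ Fp x' y).
Proof.
move=> hx hx' hy.
have hxx : 0 < x + x' by lra.
have [hP hP'] := bound_pos hxx.
set P := Num.bound (x + x') in hP hP'.
have PR : (0:R) < P%:R by rewrite ltr0n.
have hz : 0 < y * P%:R / x + y * P%:R / x'.
  by rewrite addr_gt0 // divr_gt0 // mulr_gt0.
have [hQ hQ'] := bound_pos hz.
set Q := Num.bound _ in hQ hQ'.
have h1 : y / Q%:R < x / P%:R.
  apply: small => //; have := divr_gt0 (mulr_gt0 hy PR) hx'; lra.
have h2 : y / Q%:R < x' / P%:R.
  apply: small => //; have := divr_gt0 (mulr_gt0 hy PR) hx; lra.
have hle : (x + x') / P%:R <= 1 by apply: le1.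
have e : (x + x') / P%:R = x / P%:R + x' / P%:R by rewrite mulrDl.
have h3 : y / Q%:R < (x + x') / P%:R.
  rewrite e; have := divr_gt0 hx' PR; lra.
have hxle : x / P%:R <= 1.
  move: hle; rewrite e; have := divr_gt0 hx' PR; lra.
have hx'le : x' / P%:R <= 1.
  move: hle; rewrite e; have := divr_gt0 hx PR; lra.
have G1 := Fgen hx hy hP hQ hxle h1.
have G2 := Fgen hx' hy hP hQ hx'le h2.
have G3 := Fgen hxx hy hP hQ hle h3.
have hyQ : 0 < y / Q%:R by rewrite divr_gt0 // ltr0n.
have G4 := rel1 hyQ h1 h2 ltac:(by rewrite -e).
rewrite -e in G4.
rewrite /veq.
vcomb [:: (1, fsub (Fp (x + x') y) [:: ((P * Q)%N%:Z, ((x + x') / P%:R, y / Q%:R))]);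
          (-1, fsub (Fp x y) [:: ((P * Q)%N%:Z, (x / P%:R, y / Q%:R))]);
          (-1, fsub (Fp x' y) [:: ((P * Q)%N%:Z, (x' / P%:R, y / Q%:R))]);
          ((P * Q)%N%:Z, [:: (1, ((x + x') / P%:R, y / Q%:R)); (-1, (x / P%:R, y / Q%:R)); (-1, (x' / P%:R, y / Q%:R))])].
Qed.

Lemma Fadd2 (x y y' : R) : 0 < x -> 0 < y -> 0 < y' ->
  veq (Fp x (y + y')) (Fp x y ++ Fp x y').
Proof.
move=> hx hy hy'.
have hyy : 0 < y + y' by lra.
have [hP hP'] := bound_pos hx.
set P := Num.bound x in hP hP'.
have PR : (0:R) < P%:R by rewrite ltr0n.
have hz : 0 < (y + y') * P%:R / x by rewrite divr_gt0 // mulr_gt0.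
have [hQ hQ'] := bound_pos hz.
set Q := Num.bound _ in hQ hQ'.
have QR : (0:R) < Q%:R by rewrite ltr0n.
have h3 : (y + y') / Q%:R < x / P%:R by apply: small.
have e : (y + y') / Q%:R = y / Q%:R + y' / Q%:R by rewrite mulrDl.
have hyQ : 0 < y / Q%:R by rewrite divr_gt0.
have hy'Q : 0 < y' / Q%:R by rewrite divr_gt0.
have h1 : y / Q%:R < x / P%:R by lra.
have h2 : y' / Q%:R < x / P%:R by lra.
have hle : x / P%:R <= 1 by apply: le1.
have G1 := Fgen hx hy hP hQ hle h1.
have G2 := Fgen hx hy' hP hQ hle h2.
have G3 := Fgen hx hyy hP hQ hle h3.
have G4 := rel2 (a := x / P%:R) hyQ hy'Q ltac:(by rewrite -e) hle.
rewrite -e in G4.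
rewrite /veq.
vcomb [:: (1, fsub (Fp x (y + y')) [:: ((P * Q)%N%:Z, (x / P%:R, (y + y') / Q%:R))]);
          (-1, fsub (Fp x y) [:: ((P * Q)%N%:Z, (x / P%:R, y / Q%:R))]);
          (-1, fsub (Fp x y') [:: ((P * Q)%N%:Z, (x / P%:R, y' / Q%:R))]);
          ((P * Q)%N%:Z, [:: (1, (x / P%:R, (y + y') / Q%:R)); (-1, (x / P%:R, y / Q%:R)); (-1, (x / P%:R, y' / Q%:R))])].
Qed.

Lemma ext_add (g : R -> S) :
  (forall a b, 0 < a -> 0 < b -> veq (g (a + b)) (g a ++ g b)) ->
  forall x y, veq (fscale (sgz (x + y)) (g `|x + y|))
                  (fscale (sgz x) (g `|x|) ++ fscale (sgz y) (g `|y|)).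
Proof.
move=> H x y; rewrite /veq.
have [->|hx0] := eqVneq x 0.
  rewrite sgz0 add0r; vcomb (Nil (int * S)).
have [->|hy0] := eqVneq y 0.
  rewrite sgz0 addr0; vcomb (Nil (int * S)).
have [exy|hxy0] := eqVneq (x + y) 0.
  have -> : y = - x by apply/eqP; rewrite -subr_eq0 opprK addrC exy.
  rewrite subrr sgz0 sgzN normrN; vcomb (Nil (int * S)).
have [hx|hx] : x < 0 \/ 0 < x by move: hx0; rewrite neq_lt => /orP.
all: have [hy|hy] : y < 0 \/ 0 < y by move: hy0; rewrite neq_lt => /orP.
all: have [hs|hs] : x + y < 0 \/ 0 < x + y by move: hxy0; rewrite neq_lt => /orP.
-
  rewrite (ltr0_sgz hs) (ltr0_sgz hx) (ltr0_sgz hy) (ltr0_norm hs) (ltr0_norm hx) (ltr0_norm hy).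
  have := H (- x) (- y); rewrite -opprD => /(_ ltac:(lra) ltac:(lra)) h.
  vcomb [:: (-1, fsub (g (- (x + y))) (g (- x) ++ g (- y)))].
- lra.
-
  rewrite (ltr0_sgz hs) (ltr0_sgz hx) (gtr0_sgz hy) (ltr0_norm hs) (ltr0_norm hx) (gtr0_norm hy).
  have := H y (- (x + y)); rewrite (_ : y + - (x + y) = - x); last by ring.
  move=> /(_ ltac:(lra) ltac:(lra)) h.
  vcomb [:: (1, fsub (g (- x)) (g y ++ g (- (x + y))))].
- rewrite (gtr0_sgz hs) (ltr0_sgz hx) (gtr0_sgz hy) (gtr0_norm hs) (ltr0_norm hx) (gtr0_norm hy).
  have := H (x + y) (- x); rewrite (_ : x + y + - x = y); last by ring.
  move=> /(_ ltac:(lra) ltac:(lra)) h.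
  vcomb [:: (-1, fsub (g y) (g (x + y) ++ g (- x)))].
- rewrite (ltr0_sgz hs) (gtr0_sgz hx) (ltr0_sgz hy) (ltr0_norm hs) (gtr0_norm hx) (ltr0_norm hy).
  have := H x (- (x + y)); rewrite (_ : x + - (x + y) = - y); last by ring.
  move=> /(_ ltac:(lra) ltac:(lra)) h.
  vcomb [:: (1, fsub (g (- y)) (g x ++ g (- (x + y))))].
- rewrite (gtr0_sgz hs) (gtr0_sgz hx) (ltr0_sgz hy) (gtr0_norm hs) (gtr0_norm hx) (ltr0_norm hy).
  have := H (x + y) (- y); rewrite (_ : x + y + - y = x); last by ring.
  move=> /(_ ltac:(lra) ltac:(lra)) h.
  vcomb [:: (-1, fsub (g x) (g (x + y) ++ g (- y)))].
- lra.
- rewrite (gtr0_sgz hs) (gtr0_sgz hx) (gtr0_sgz hy) (gtr0_norm hs) (gtr0_norm hx) (gtr0_norm hy).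
  have := H x y hx hy => h.
  vcomb [:: (1, fsub (g (x + y)) (g x ++ g y))].
Qed.

Definition Fz_def (x y : R) : S := fscale (sgz x * sgz y) (Fp `|x| `|y|).
Fact Fz_key : unit. Proof. exact: tt. Qed.
Definition Fz := locked_with Fz_key Fz_def.
Lemma FzE x y : Fz x y = fscale (sgz x * sgz y) (Fp `|x| `|y|). Proof. by rewrite /Fz unlock. Qed.

Lemma fcoef_FzN1 x y z : fcoef (Fz (- x) y) z = - fcoef (Fz x y) z.
Proof. by rewrite !FzE sgzN normrN !fcoef_scale mulNr mulNr. Qed.
Lemma fcoef_FzN2 x y z : fcoef (Fz x (- y)) z = - fcoef (Fz x y) z.
Proof. by rewrite !FzE sgzN normrN !fcoef_scale mulrN mulNr. Qed.
Lemma fcoef_Fz0l y z : fcoef (Fz 0 y) z = 0.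
Proof. by rewrite !FzE sgz0 mul0r fcoef_scale mul0r. Qed.
Lemma fcoef_Fz0r y z : fcoef (Fz y 0) z = 0.
Proof. by rewrite !FzE sgz0 mulr0 fcoef_scale mul0r. Qed.

Ltac vfin2 := move=> z; rewrite ?big_cons ?big_nil /= ?fcoef_sub ?fcoef_cat ?fcoef_scale ?fcoef_cons ?fcoef_nil ?fcoef_FzN1 ?fcoef_FzN2 ?fcoef_Fz0l ?fcoef_Fz0r /=; ring.
Tactic Notation "vcomb2" uconstr(l) := refine (@span_lin int (R * R)%type (@relV R) l _ _ _); [vforall | vfin2].

Lemma FzA1 x x' y : veq (Fz (x + x') y) (Fz x y ++ Fz x' y).
Proof.
rewrite /veq !FzE.
have [->|hy0] := eqVneq y 0.
  rewrite sgz0 !mulr0; vcomb (Nil (int * S)).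
have hy : 0 < `|y| by rewrite normr_gt0.
have h := ext_add (g := fun a => Fp a `|y|) (fun a b ha hb => Fadd1 ha hb hy) x x'.
move: h => /= h.
vcomb [:: (sgz y, fsub (fscale (sgz (x + x')) (Fp `|x + x'| `|y|))
             (fscale (sgz x) (Fp `|x| `|y|) ++ fscale (sgz x') (Fp `|x'| `|y|)))].
Qed.

Lemma FzA2 x y y' : veq (Fz x (y + y')) (Fz x y ++ Fz x y').
Proof.
rewrite /veq !FzE.
have [->|hx0] := eqVneq x 0.
  rewrite sgz0 !mul0r; vcomb (Nil (int * S)).
have hx : 0 < `|x| by rewrite normr_gt0.
have h := ext_add (g := fun b => Fp `|x| b) (fun a b ha hb => Fadd2 hx ha hb) y y'.
move: h => /= h.
vcomb [:: (sgz x, fsub (fscale (sgz (y + y')) (Fp `|x| `|y + y'|))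
             (fscale (sgz y) (Fp `|x| `|y|) ++ fscale (sgz y') (Fp `|x| `|y'|)))].
Qed.

Lemma FzZn1 (n : nat) a b : veq (Fz (n%:R * a) b) (fscale n%:Z (Fz a b)).
Proof.
rewrite /veq; elim: n => [|n IH].
  rewrite mul0r; vcomb2 (Nil (int * S)).
have := FzA1 (n%:R * a) a b.
rewrite (_ : n%:R * a + a = n.+1%:R * a); last by rewrite -addn1 natrD mulrDl mul1r.
move=> h.
vcomb2 [:: (1, fsub (Fz (n.+1%:R * a) b) (Fz (n%:R * a) b ++ Fz a b));
           (1, fsub (Fz (n%:R * a) b) (fscale n%:Z (Fz a b)))].
Qed.

Lemma FzZn2 (n : nat) a b : veq (Fz a (n%:R * b)) (fscale n%:Z (Fz a b)).
Proof.
rewrite /veq; elim: n => [|n IH].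
  rewrite mul0r; vcomb2 (Nil (int * S)).
have := FzA2 a (n%:R * b) b.
rewrite (_ : n%:R * b + b = n.+1%:R * b); last by rewrite -addn1 natrD mulrDl mul1r.
move=> h.
vcomb2 [:: (1, fsub (Fz a (n.+1%:R * b)) (Fz a (n%:R * b) ++ Fz a b));
           (1, fsub (Fz a (n%:R * b)) (fscale n%:Z (Fz a b)))].
Qed.

Lemma FzZ1 (k : int) a b : veq (Fz (k%:~R * a) b) (fscale k (Fz a b)).
Proof.
case: k => n.
  exact: FzZn1.
have h := FzZn1 n.+1 a b.
rewrite /veq NegzE intrN mulNr -pmulrn.
vcomb2 [:: (-1, fsub (Fz (n.+1%:R * a) b) (fscale n.+1%:Z (Fz a b)))].
Qed.

Lemma FzZ2 (k : int) a b : veq (Fz a (k%:~R * b)) (fscale k (Fz a b)).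
Proof.
case: k => n.
  exact: FzZn2.
have h := FzZn2 n.+1 a b.
rewrite /veq NegzE intrN mulNr -pmulrn.
vcomb2 [:: (-1, fsub (Fz a (n.+1%:R * b)) (fscale n.+1%:Z (Fz a b)))].
Qed.

Lemma Fzbal (k : int) a b : veq (Fz (k%:~R * a) b) (Fz a (k%:~R * b)).
Proof.
have h1 := FzZ1 k a b; have h2 := FzZ2 k a b.
rewrite /veq; vcomb2 [:: (1, fsub (Fz (k%:~R * a) b) (fscale k (Fz a b)));
                        (-1, fsub (Fz a (k%:~R * b)) (fscale k (Fz a b)))].
Qed.

Lemma Fzbalq (r : rat) a b : veq (Fz (ratr r * a) b) (Fz a (ratr r * b)).
Proof.
set m := numq r; set n := denq r.
have hn : (0 : R) < n%:~R by rewrite ltr0z denq_gt0.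
have hr : ratr r = m%:~R / n%:~R :> R by [].
set a0 := a / n%:~R.
have e1 : ratr r * a = m%:~R * a0 by rewrite hr /a0; field; rewrite gt_eqF.
have e2 : a = n%:~R * a0 by rewrite /a0; field; rewrite gt_eqF.
have e3 : n%:~R * (ratr r * b) = m%:~R * b by rewrite hr; field; rewrite gt_eqF.
have h1 := Fzbal m a0 b.
have h2 := Fzbal n a0 (ratr r * b).
rewrite e3 -e2 in h2.
rewrite /veq e1.
vcomb2 [:: (1, fsub (Fz (m%:~R * a0) b) (Fz a0 (m%:~R * b)));
           (-1, fsub (Fz a (ratr r * b)) (Fz a0 (m%:~R * b)))].
Qed.

Lemma FzG (a b : R) : 0 < b -> b < a -> a <= 1 -> veq (Fz a b) [:: (1, (a, b))].
Proof.
move=> hb hba ha.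
have hpa : 0 < a := lt_trans hb hba.
have h := Fgen (p := 1) (q := 1) hpa hb isT isT ltac:(by rewrite divr1) ltac:(by rewrite !divr1).
rewrite !divr1 in h.
rewrite /veq FzE (gtr0_sgz hb) (gtr0_sgz hpa) (gtr0_norm hb) (gtr0_norm hpa).
vcomb [:: (1, fsub (Fp a b) [:: ((1 * 1)%N%:Z, (a, b))])].
Qed.

Lemma Fp_diag (t : R) : 0 < t -> VR (Fp t t).
Proof.
move=> ht.
have [hN hN'] := bound_pos ht.
set N := Num.bound t in hN hN'.
have NR : (0:R) < N%:R by rewrite ltr0n.
set k := (24 * N)%N.
have kR : (0:R) < k%:R by rewrite ltr0n muln_gt0 hN.
set s := t / k%:R.
have hs : 0 < s by rewrite divr_gt0.
have ek : k%:R = 24 * N%:R :> R by rewrite /k natrM.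
have hs4 : 4 * s <= 1.
  rewrite /s ek.
  have -> : 4 * (t / (24 * N%:R)) = (t / N%:R) / 6 by field; rewrite gt_eqF.
  have : t / N%:R <= 1 by apply: le1.
  move=> h; lra.
have H3 := rel3 (a := 3%:R * s) (b := 2%:R * s) ltac:(lra) ltac:(lra) ltac:(lra) ltac:(lra).
rewrite (_ : 2 * (2%:R * s) = 4%:R * s) in H3; last by rewrite mulrA -natrM.
have G1 := FzG (a := 3%:R * s) (b := 2%:R * s) ltac:(lra) ltac:(lra) ltac:(lra).
have G2 := FzG (a := 4%:R * s) (b := 3%:R * s) ltac:(lra) ltac:(lra) ltac:(lra).
have L1 := FzZn1 3 s (2%:R * s).
have L2 := FzZn2 2 s s.
have L3 := FzZn1 4 s (3%:R * s).
have L4 := FzZn2 3 s s.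
have L5 := FzZn1 k s (k%:R * s).
have L6 := FzZn2 k s s.
have et : k%:R * s = t by rewrite /s; field; rewrite gt_eqF.
rewrite et in L5 L6.
rewrite /veq in G1 G2 L1 L2 L3 L4 L5 L6.
apply: (@span_feq _ _ _ (Fz t t)).
  by move=> z; rewrite FzE (gtr0_sgz ht) (gtr0_norm ht) fcoef_scale !mul1r.
refine (@span_lin int (R * R)%type (@relV R) [:: (1, fsub (Fz t t) (fscale k%:Z (Fz s t)));
          (k%:Z, fsub (Fz s t) (fscale k%:Z (Fz s s)));
          ((N * N * 24)%N%:Z, [:: (2%:Z, (3%:R * s, 2%:R * s)); (1, (4%:R * s, 3%:R * s))]);
          ((N * N * 24)%N%:Z * 2, fsub (Fz (3%:R * s) (2%:R * s)) [:: (1, (3%:R * s, 2%:R * s))]);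
          ((N * N * 24)%N%:Z, fsub (Fz (4%:R * s) (3%:R * s)) [:: (1, (4%:R * s, 3%:R * s))]);
          ((N * N * 24)%N%:Z * (-2), fsub (Fz (3%:R * s) (2%:R * s)) (fscale 3%:Z (Fz s (2%:R * s))));
          ((N * N * 24)%N%:Z * (-6), fsub (Fz s (2%:R * s)) (fscale 2%:Z (Fz s s)));
          ((N * N * 24)%N%:Z * (-1), fsub (Fz (4%:R * s) (3%:R * s)) (fscale 4%:Z (Fz s (3%:R * s))));
          ((N * N * 24)%N%:Z * (-4), fsub (Fz s (3%:R * s)) (fscale 3%:Z (Fz s s)))] _ _ _); first by vforall.
move=> z; rewrite ?big_cons ?big_nil /= ?fcoef_sub ?fcoef_cat ?fcoef_scale ?fcoef_cons ?fcoef_nil /= /k !PoszM. ring.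
Qed.

Lemma Fz_diag (u : R) : VR (Fz u u).
Proof.
have [->|hz] := eqVneq u 0.
  vcomb2 (Nil (int * S)).
have hz' : 0 < `|u| by rewrite normr_gt0.
have h := Fp_diag hz'.
rewrite FzE; vcomb [:: (sgz u * sgz u, Fp `|u| `|u|)].
Qed.

Notation W := (fsum rat (R * R)%type).

Definition Psi (w : W) : S := flatten [seq Fz (ratr p.1 * p.2.1) p.2.2 | p <- w].

Lemma Psi_cat (w w' : W) : Psi (w ++ w') = Psi w ++ Psi w'.
Proof. by rewrite /Psi map_cat flatten_cat. Qed.

Lemma Psi_cons (p : rat * (R * R)) (w : W) : Psi (p :: w) = Fz (ratr p.1 * p.2.1) p.2.2 ++ Psi w.
Proof. by []. Qed.

Lemma Psi_nil : Psi [::] = [::]. Proof. by []. Qed.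

Lemma fcoef_Psi (w : W) z : fcoef (Psi w) z = \sum_(p <- w) fcoef (Fz (ratr p.1 * p.2.1) p.2.2) z.
Proof. by rewrite /Psi fcoef_flatten big_map. Qed.

Lemma Psi_rel (c : rat) (r : W) : relW r -> VR (Psi (fscale c r)).
Proof.
case=> [[x [x' [y ->]]]|[[x [y [y' ->]]]|[[q [x [y ->]]]|[[q [x [y ->]]]|[x ->]]]]];
  rewrite /fscale /= ?Psi_cons /= Psi_nil ?mulr1 ?mulrN1 ?mulrN ?rmorphN ?mulNr.
- have h := FzA1 (ratr c * x) (ratr c * x') y.
  rewrite -mulrDr in h.
  vcomb2 [:: (1, fsub (Fz (ratr c * (x + x')) y) (Fz (ratr c * x) y ++ Fz (ratr c * x') y))].
- have h := FzA2 (ratr c * x) y y'.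
  vcomb2 [:: (1, fsub (Fz (ratr c * x) (y + y')) (Fz (ratr c * x) y ++ Fz (ratr c * x) y'))].
- rewrite rmorphM mulrA; vcomb2 (Nil (int * S)).
- have h := Fzbalq q (ratr c * x) y.
  rewrite (_ : ratr q * (ratr c * x) = ratr (c * q) * x) in h; last by rewrite rmorphM; ring.
  vcomb2 [:: (-1, fsub (Fz (ratr (c * q) * x) y) (Fz (ratr c * x) (ratr q * y)))].
- set m := numq c; set n := denq c.
  have hn : (0 : R) < n%:~R by rewrite ltr0z denq_gt0.
  set z0 := x / n%:~R.
  have e1 : ratr c * x = m%:~R * z0 by rewrite (_ : ratr c = m%:~R / n%:~R) // /z0; field; rewrite gt_eqF.
  have e2 : x = n%:~R * z0 by rewrite /z0; field; rewrite gt_eqF.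
  have h1 := FzZ1 m z0 (n%:~R * z0).
  have h2 := FzZ2 n z0 z0.
  have h3 := Fz_diag z0.
  rewrite e1 {1}e2.
  vcomb2 [:: (1, fsub (Fz (m%:~R * z0) (n%:~R * z0)) (fscale m (Fz z0 (n%:~R * z0))));
             (m, fsub (Fz z0 (n%:~R * z0)) (fscale n (Fz z0 z0)));
             (m * n, Fz z0 z0)].
Qed.

Lemma Psi_fcomb (l : seq (rat * W)) :
  (forall i, (i < size l)%N -> relW (nth (0, [::]) l i).2) -> VR (Psi (fcomb l)).
Proof.
elim: l => [|q l IH] H.
  rewrite /fcomb /= Psi_nil; vcomb (Nil (int * S)).
have h1 := Psi_rel q.1 (H 0%N isT).
have h2 : VR (Psi (fcomb l)) by apply: IH => i hi; exact: (H i.+1).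
rewrite /fcomb /= Psi_cat -/(fcomb l).
vcomb [:: (1, Psi (fscale q.1 q.2)); (1, Psi (fcomb l))].
Qed.

Lemma PsiA (k : R * R) (A : W) : all (fun p => p.2 == k) A ->
  veq (Psi A) (Fz (ratr (fcoef A k) * k.1) k.2).
Proof.
elim: A => [|[c k'] A IH] /=.
  by move=> _; rewrite /veq fcoef_nil rmorph0 mul0r Psi_nil; vcomb2 (Nil (int * S)).
move=> /andP [/eqP -> hA]; move: (IH hA) => h.
rewrite /veq Psi_cons /= fcoef_cons /= eqxx mulr1 rmorphD mulrDl.
have h2 := FzA1 (ratr c * k.1) (ratr (fcoef A k) * k.1) k.2.
vcomb2 [:: (1, fsub (Psi A) (Fz (ratr (fcoef A k) * k.1) k.2));
           (-1, fsub (Fz (ratr c * k.1 + ratr (fcoef A k) * k.1) k.2)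
                   (Fz (ratr c * k.1) k.2 ++ Fz (ratr (fcoef A k) * k.1) k.2))].
Qed.

Lemma Z0 (n : nat) (w : W) : (size w < n)%N -> (forall z, fcoef w z = 0) -> VR (Psi w).
Proof.
elim: n w => [//|n IH] [|[c k] w'] hs hw.
  rewrite Psi_nil; vcomb (Nil (int * S)).
set A := filter (fun p => p.2 == k) w'.
set B := filter (fun p => p.2 != k) w'.
have ha : forall z, fcoef (Psi w') z = fcoef (Psi A) z + fcoef (Psi B) z.
  by move=> z; rewrite !fcoef_Psi !big_filter [LHS](bigID (fun p => p.2 == k)) /=.
have hb : fcoef w' k = fcoef A k.
  by rewrite /fcoef big_filter_cond; apply: eq_bigl => p; rewrite andbb.
have hc : forall z, fcoef B z = 0.
  move=> z; rewrite /fcoef big_filter_cond.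
  have [ezk|nzk] := eqVneq z k.
    by rewrite big_pred0 // => p; rewrite ezk; case: (p.2 == k).
  have hkz : (k == z) = false by apply/eqP => e; rewrite e eqxx in nzk.
  have e : fcoef w' z = 0 by move: (hw z); rewrite fcoef_cons /= hkz mulr0 add0r.
  rewrite -[RHS]e /fcoef; apply: eq_bigl => p.
  case: (eqVneq p.2 z) => [e2|_]; last by rewrite andbF.
  by rewrite e2 andbT.
have hB : VR (Psi B).
  apply: (IH B) => //; rewrite /B size_filter; apply: (leq_ltn_trans (count_size _ _)); exact: hs.
have hA := PsiA (A := A) (k := k) (filter_all _ _).
have hk := hw k; rewrite fcoef_cons /= eqxx mulr1 hb in hk.
have hF := FzA1 (ratr c * k.1) (ratr (fcoef A k) * k.1) k.2.
rewrite -mulrDl -rmorphD hk rmorph0 mul0r in hF.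
rewrite Psi_cons /=.
refine (@span_lin int (R * R)%type (@relV R)
  [:: (1, fsub (Psi A) (Fz (ratr (fcoef A k) * k.1) k.2)); (1, Psi B);
      (-1, fsub (Fz 0 k.2) (Fz (ratr c * k.1) k.2 ++ Fz (ratr (fcoef A k) * k.1) k.2))] _ _ _).
  by vforall.
move=> z; rewrite fcoef_cat ha ?big_cons ?big_nil /= ?fcoef_sub ?fcoef_cat ?fcoef_Fz0l; ring.
Qed.

Lemma Psi_feq (w w' : W) : feq w w' -> veq (Psi w) (Psi w').
Proof.
move=> e.
have := Z0 (n := (size (w ++ fscale (-1) w')).+1) (w := w ++ fscale (-1) w') (ltnSn _).
move=> /(_ ltac:(by move=> z; rewrite fcoef_cat fcoef_scale e mulN1r subrr)).
rewrite Psi_cat => h.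
apply: (span_feq _ h) => z.
rewrite fcoef_sub !fcoef_cat !fcoef_Psi /fscale big_map; congr (_ + _).
rewrite -sumrN; apply: eq_bigr => p _ /=.
by rewrite mulN1r rmorphN mulNr fcoef_FzN1.
Qed.

Lemma Psi_wedge (s : S) : gen_supported s -> veq (Psi (wedge_map s)) s.
Proof.
elim: s => [|[c [a b]] s IH] /=.
  by move=> _; rewrite /veq Psi_nil; vcomb (Nil (int * S)).
move=> /andP [/andP [/andP [hb hba] ha] hs].
have h1 := IH hs.
rewrite /veq /= in h1 *.
rewrite Psi_cons /= ratr_int.
have h2 := FzZ1 c a b.
have h3 := FzG hb hba ha.
vcomb2 [:: (1, fsub (Psi (wedge_map s)) s);
           (1, fsub (Fz (c%:~R * a) b) (fscale c (Fz a b)));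
           (c, fsub (Fz a b) [:: (1, (a, b))])].
Qed.

Notation WR := (@W_rel R).
Ltac wfin := move=> z; rewrite ?big_cons ?big_nil /= ?fcoef_sub ?fcoef_cat ?fcoef_scale ?fcoef_cons ?fcoef_nil /=; ring.
Tactic Notation "wcomb" uconstr(l) := refine (@span_lin rat (R * R)%type (@relW R) l _ _ _); [vforall | wfin].

Lemma w1 x x' y : WR [:: (1, (x + x', y)); (-1, (x, y)); (-1, (x', y))].
Proof. apply: span_rel; left; by exists x, x', y. Qed.
Lemma w2 x y y' : WR [:: (1, (x, y + y')); (-1, (x, y)); (-1, (x, y'))].
Proof. apply: span_rel; right; left; by exists x, y, y'. Qed.
Lemma w3 q x y : WR [:: (1, (ratr q * x, y)); (- q, (x, y))].
Proof. apply: span_rel; do 2 right; left; by exists q, x, y. Qed.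
Lemma w4 q x y : WR [:: (1, (x, ratr q * y)); (- q, (x, y))].
Proof. apply: span_rel; do 3 right; left; by exists q, x, y. Qed.
Lemma w5 x : WR [:: (1, (x, x))].
Proof. apply: span_rel; do 4 right; by exists x. Qed.

Lemma wanti a b : WR [:: (1, (a, b)); (1, (b, a))].
Proof.
have H2 := w5 (a + b); have H3 := w1 a b (a + b); have H4 := w2 a a b.
have H5 := w2 b a b; have H6 := w5 a; have H7 := w5 b.
wcomb [:: (1, [:: (1, (a + b, a + b))]);
          (-1, [:: (1, (a + b, a + b)); (-1, (a, a + b)); (-1, (b, a + b))]);
          (-1, [:: (1, (a, a + b)); (-1, (a, a)); (-1, (a, b))]);
          (-1, [:: (1, (b, a + b)); (-1, (b, a)); (-1, (b, b))]);
          (-1, [:: (1, (a, a))]); (-1, [:: (1, (b, b))])].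
Qed.

Lemma fcoef_wedge (s : S) z : fcoef (wedge_map s) z = (fcoef s z)%:~R.
Proof.
elim: s => [|[c p] s IH]; first by rewrite /wedge_map /= !fcoef_nil.
rewrite /wedge_map /= !fcoef_cons -/(wedge_map s) IH /= intrD.
by case: (p == z); rewrite ?mulr1 ?mulr0.
Qed.

Lemma relV_W (r : S) : relV r -> WR (wedge_map r).
Proof.
case=> [[a [a' [b [_ _ _ ->]]]]|[[a [b [b' [_ _ _ ->]]]]|[a [b [_ _ _ _ ->]]]]].
- have h := w1 a a' b; wcomb [:: (1, [:: (1, (a + a', b)); (-1, (a, b)); (-1, (a', b))])].
- have h := w2 a b b'; wcomb [:: (1, [:: (1, (a, b + b')); (-1, (a, b)); (-1, (a, b'))])].
- have H1 := w3 2 b a.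
  rewrite (_ : ratr 2 = 2 :> R) in H1; last by rewrite rmorph_nat.
  have H2 := wanti a b.
  wcomb [:: (1, [:: (1, (2 * b, a)); (-2, (b, a))]); (2, [:: (1, (a, b)); (1, (b, a))])].
Qed.

Lemma Forall_nth (T : Type) (P : T -> Prop) (d : T) (l : seq T) :
  (forall i, (i < size l)%N -> P (nth d l i)) -> List.Forall P l.
Proof.
elim: l => [|x l IH] H; first exact: List.Forall_nil.
apply: List.Forall_cons; first exact: (H 0%N).
apply: IH => i hi; exact: (H i.+1).
Qed.

Lemma partI (s : S) : VR s -> WR (wedge_map s).
Proof.
case=> l [Hl Hf].
apply: (@span_lin rat (R * R)%type (@relW R) [seq (q.1%:~R, wedge_map q.2) | q <- l]).
  apply: (Forall_nth (d := (0, [::]))) => i; rewrite size_map => hi.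
  rewrite (nth_map (0, [::])) //=; apply: relV_W; exact: Hl.
move=> z; rewrite fcoef_wedge -Hf fcoef_fcomb big_map.
rewrite (big_morph (fun x : int => x%:~R : rat) (@intrD _) (mulr0z 1)).
apply: eq_bigr => q _; by rewrite intrM fcoef_wedge.
Qed.

Definition Psurj (x y : R) := exists s : S, gen_supported s /\ WR (fsub [:: (1, (x, y))] (wedge_map s)).

Ltac wfin2 := move=> z; rewrite ?big_cons ?big_nil /= ?fcoef_sub ?fcoef_cat ?fcoef_scale ?fcoef_cons ?fcoef_nil ?fcoef_wedge ?fcoef_scale ?intrM /=; ring.
Tactic Notation "wcomb2" uconstr(l) := refine (@span_lin rat (R * R)%type (@relW R) l _ _ _); [vforall | wfin2].

Lemma gen_scale (c : int) (s : S) : gen_supported s -> gen_supported (fscale c s).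
Proof. by rewrite /gen_supported /fscale all_map. Qed.

Lemma surj_pos a b : 0 < b -> b < a -> Psurj a b.
Proof.
move=> hb hba.
have ha : 0 < a := lt_trans hb hba.
have [hN hN'] := bound_pos ha.
set N := Num.bound a in hN hN'.
have NR : (0:R) < N%:R by rewrite ltr0n.
exists [:: ((N * N)%N%:Z, (a / N%:R, b / N%:R))]; split.
  rewrite /gen_supported /= andbT /isgen /= divr_gt0 //= ltr_pM2r ?invr_gt0 // hba /=.
  exact: le1.
have H1 := w3 (N%:Q) (a / N%:R) b.
have H2 := w4 (N%:Q) (a / N%:R) (b / N%:R).
have eN : ratr N%:Q = N%:R :> R by rewrite ratr_int.
rewrite eN (_ : N%:R * (a / N%:R) = a) in H1; last by field; rewrite gt_eqF.
rewrite eN (_ : N%:R * (b / N%:R) = b) in H2; last by field; rewrite gt_eqF.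
wcomb2 [:: (1, [:: (1, (a, b)); (- N%:Q, (a / N%:R, b))]);
           (N%:Q, [:: (1, (a / N%:R, b)); (- N%:Q, (a / N%:R, b / N%:R))])].
Qed.

Lemma Psurj_neg1 x y : Psurj x y -> Psurj (- x) y.
Proof.
case=> s [hs h]; exists (fscale (-1) s); split; first exact: gen_scale.
have H := w3 (-1) x y.
rewrite rmorphN1 mulN1r opprK in H.
wcomb2 [:: (1, [:: (1, (- x, y)); (1, (x, y))]); (-1, fsub [:: (1, (x, y))] (wedge_map s))].
Qed.

Lemma Psurj_neg2 x y : Psurj x y -> Psurj x (- y).
Proof.
case=> s [hs h]; exists (fscale (-1) s); split; first exact: gen_scale.
have H := w4 (-1) x y.
rewrite rmorphN1 mulN1r opprK in H.
wcomb2 [:: (1, [:: (1, (x, - y)); (1, (x, y))]); (-1, fsub [:: (1, (x, y))] (wedge_map s))].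
Qed.

Lemma Psurj_pos a b : 0 < a -> 0 < b -> Psurj a b.
Proof.
move=> ha hb.
have [hab|hab|->] := ltgtP a b.
- have [s [hs h]] := surj_pos ha hab.
  exists (fscale (-1) s); split; first exact: gen_scale.
  have H := wanti a b.
  wcomb2 [:: (1, [:: (1, (a, b)); (1, (b, a))]); (-1, fsub [:: (1, (b, a))] (wedge_map s))].
- exact: surj_pos.
- exists [::]; split=> //.
  have H := w5 b.
  wcomb2 [:: (1, [:: (1, (b, b))])].
Qed.

Lemma Psurj_all x y : Psurj x y.
Proof.
have [->|hx] := eqVneq x 0.
  exists [::]; split=> //.
  have H := w3 0 0 y; rewrite rmorph0 mul0r in H.
  wcomb2 [:: (1, [:: (1, (0, y)); (- 0, (0, y))])].
have [->|hy] := eqVneq y 0.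
  exists [::]; split=> //.
  have H := w4 0 x 0; rewrite rmorph0 mul0r in H.
  wcomb2 [:: (1, [:: (1, (x, 0)); (- 0, (x, 0))])].
have hx' : 0 < `|x| by rewrite normr_gt0.
have hy' : 0 < `|y| by rewrite normr_gt0.
have P0 := Psurj_pos hx' hy'.
have P1 : Psurj `|x| y.
  have [hy0|hy0] : y < 0 \/ 0 < y by move: hy; rewrite neq_lt => /orP.
    by move: P0; rewrite (ltr0_norm hy0) => /Psurj_neg2; rewrite opprK.
  by move: P0; rewrite (gtr0_norm hy0).
have [hx0|hx0] : x < 0 \/ 0 < x by move: hx; rewrite neq_lt => /orP.
  by move: P1; rewrite (ltr0_norm hx0) => /Psurj_neg1; rewrite opprK.
by move: P1; rewrite (gtr0_norm hx0).
Qed.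

Lemma partII (w : W) : exists s : S, gen_supported s /\ WR (fsub w (wedge_map s)).
Proof.
elim: w => [|[q [x y]] w [s [hs h]]].
  exists [::]; split=> //; wcomb2 (Nil (rat * W)).
have [s1 [hs1 h1]] := Psurj_all (ratr q * x) y.
have H := w3 q x y.
exists (s1 ++ s); split; first by rewrite /gen_supported all_cat; apply/andP.
rewrite /wedge_map map_cat -/(wedge_map s1) -/(wedge_map s).
wcomb2 [:: (1, fsub w (wedge_map s)); (1, fsub [:: (1, (ratr q * x, y))] (wedge_map s1));
           (-1, [:: (1, (ratr q * x, y)); (- q, (x, y))])].
Qed.

Lemma partIII (s : S) : gen_supported s -> WR (wedge_map s) -> VR s.
Proof.
move=> hs [l [Hl Hf]].
have h1 := Psi_fcomb Hl.
have h2 := Psi_feq Hf.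
have h3 := Psi_wedge hs.
rewrite /veq in h2 h3.
vcomb [:: (1, Psi (fcomb l)); (-1, fsub (Psi (fcomb l)) (Psi (wedge_map s)));
          (-1, fsub (Psi (wedge_map s)) s)].
Qed.
End Real.

Unset Implicit Arguments.
Set Strict Implicit.

Theorem lemma9p1 (R : realType) :
  [/\ (forall s : fsum int (R * R)%type, V_rel s -> W_rel (wedge_map s)),
      (forall w : fsum rat (R * R)%type, exists s : fsum int (R * R)%type,
          gen_supported s /\ W_rel (fsub w (wedge_map s))) &
      (forall s : fsum int (R * R)%type, gen_supported s ->
          W_rel (wedge_map s) -> V_rel s)].
Proof. split; [exact: partI | exact: partII | exact: partIII]. Qed.
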